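(* Let $p$ be an odd prime, let $m,k$ be integers with $0<k\le\lfloor m/2\rfloor$ and $m/\gcd(m,k)$ odd, and put $l=\gcd(m,k)$. Let $\alpha\in\mathbb{F}_{p^l}$, $\alpha\neq 0$, be a non-square in $\mathbb{F}_{p^m}$, and let $\sigma(x)=x^{p^r}$ with $0\le r\le\lfloor m/2\rfloor$. With $x\circ_k y=x^{p^k}y+y^{p^k}x$, define on $\mathbb{F}_{p^m}^2$ the presemifield multiplication $(a,b)*(c,d)=(a\circ_k c+\alpha\,\sigma(b\circ_k d),\ ad+bc)$, let $L(a,b)=(a,b)*(1,0)=(a+a^{p^k},b)$ (an additive bijection of $\mathbb{F}_{p^m}^2$), and let $\mathbb{S}_{k,\sigma}=(\mathbb{F}_{p^m}^2,+,\star)$ be the semifield with multiplication defined by $L(x)\star L(y)=x*y$. Then: (1) if $\sigma$ is the identity, the middle nucleus $N_m(\mathbb{S}_{k,\sigma})$ is isomorphic to $\mathbb{F}_{p^{2l}}$; (2) if $\sigma$ is not the identity, the middle nucleus $N_m(\mathbb{S}_{k,\sigma})$ is isomorphic to $\mathbb{F}_{p^l}$.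
   Context: The middle nucleus of a semifield $(\mathbb{S},+,\star)$ is $N_m(\mathbb{S})=\{a\in\mathbb{S}:(x\star a)\star y=x\star(a\star y)\text{ for all }x,y\in\mathbb{S}\}$; it is a finite field under the semifield operations. The multiplication $*$ defines a presemifield (distributive, no zero divisors), and $\star$ defines a (commutative) semifield with identity $L(1,0)$. *)

(* Defs.v *)
From HB Require Import structures.
From mathcomp Require Import all_boot all_order all_algebra all_field.
Set Implicit Arguments. Unset Strict Implicit. Unset Printing Implicit Defensive.
Import GRing.Theory.
Local Open Scope ring_scope.

(* The field F plays the role of F_{p^m}; pairs F * F model F_{p^m}^2. *)
Section Semifield.
Variables (F : finFieldType) (p k r : nat) (alpha : F).

Definition circk (x y : F) : F := x ^+ (p ^ k) * y + y ^+ (p ^ k) * x.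

Definition sigmar (x : F) : F := x ^+ (p ^ r).

Definition pmul (x y : F * F) : F * F :=
  (circk x.1 y.1 + alpha * sigmar (circk x.2 y.2), x.1 * y.2 + x.2 * y.1).

(* L(a,b) = (a,b)*(1,0) = (a + a^{p^k}, b) *)
Definition Lmap (x : F * F) : F * F := (x.1 + x.1 ^+ (p ^ k), x.2).

(* inverse of L (L is a bijection under the hypotheses of the theorem) *)
Definition Linv (z : F * F) : F * F := odflt (0, 0) [pick x : F * F | Lmap x == z].

Definition smul (u v : F * F) : F * F := pmul (Linv u) (Linv v).

Definition sadd (u v : F * F) : F * F := (u.1 + v.1, u.2 + v.2).

Definition middle_nucleus : {set F * F} :=
  [set a | [forall x : F * F, forall y : F * F,
             smul (smul x a) y == smul x (smul a y)]].

Definition nucleus_iso (K : finFieldType) : Prop :=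
  exists phi : K -> F * F,
    [/\ injective phi,
        (forall a, a \in middle_nucleus <-> exists x, phi x = a),
        (forall x y, phi (x + y) = sadd (phi x) (phi y)),
        (forall x y, phi (x * y) = smul (phi x) (phi y))
      & phi 1 = Lmap (1, 0)].

End Semifield.

(* Main.v *)
Require Import Defs.
From HB Require Import structures.
From mathcomp Require Import all_boot all_order all_algebra all_field.
From mathcomp Require Import ring zify.
From mathcomp Require Import cyclic.
From Stdlib Require Import Classical.
Import GRing.Theory.
Local Open Scope ring_scope.

Lemma pnat_pchar_exp (F : fieldType) p n : p \in [pchar F] -> [pchar F].-nat (p ^ n)%N.
Proof.
move=> cp; have pp := pcharf_prime cp.
rewrite (eq_pnat _ (pcharf_eq cp)) pnatX pnat_id //; by [].
Qed.

Lemma frD (F : fieldType) p n (x y : F) : p \in [pchar F] ->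
  (x + y) ^+ (p ^ n)%N = x ^+ (p ^ n)%N + y ^+ (p ^ n)%N.
Proof. by move=> cp; apply: exprDn_pchar; apply: pnat_pchar_exp. Qed.

Lemma frN (F : fieldType) p n (x : F) : p \in [pchar F] ->
  (- x) ^+ (p ^ n)%N = - x ^+ (p ^ n)%N.
Proof.
move=> cp; apply/eqP; rewrite -subr_eq0 opprK -frD // addNr expr0n.
by rewrite expn_eq0 eqn0Ngt (prime_gt0 (pcharf_prime cp)).

Qed.

Lemma frB (F : fieldType) p n (x y : F) : p \in [pchar F] ->
  (x - y) ^+ (p ^ n)%N = x ^+ (p ^ n)%N - y ^+ (p ^ n)%N.
Proof. by move=> cp; rewrite frD // frN. Qed.

Lemma frC (F : fieldType) (p a b : nat) (x : F) :
  x ^+ (p ^ (a + b))%N = (x ^+ (p ^ b)%N) ^+ (p ^ a).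
Proof. by rewrite -exprM expnD mulnC. Qed.

Lemma fr_iter (F : fieldType) (p a j : nat) (x : F) :
  x ^+ (p ^ a)%N = x -> x ^+ (p ^ (a * j))%N = x.
Proof.
move=> h; elim: j => [|j IH]; first by rewrite muln0 expn0 expr1.
by rewrite mulnS addnC (frC _ _ (a * j) a) h IH.
Qed.

Lemma fr_gcd (F : fieldType) (p a b : nat) (x : F) : (0 < a)%N ->
  x ^+ (p ^ a)%N = x -> x ^+ (p ^ b)%N = x -> x ^+ (p ^ gcdn a b)%N = x.
Proof.
move=> a0 ha hb; have [u _ /dvdnP[v hv]] := Bezoutl b a0.
have h1 := @fr_iter _ _ _ v _ ha; have h2 := @fr_iter _ _ _ u _ hb.
have e : (a * v = gcdn a b + b * u)%N by rewrite mulnC -hv mulnC.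
by rewrite -{2}h1 e frC h2.
Qed.

Lemma vanish (F : finFieldType) (P : {poly F}) :
  (size P <= #|F|)%N -> (forall x, P.[x] = 0) -> P = 0.
Proof.
move=> hs hx; apply: (@roots_geq_poly_eq0 _ P (enum F)).
- by apply/allP => x _; rewrite /root hx.
- exact: enum_uniq.
- by rewrite -cardE.
Qed.

Lemma top_coef (F : finFieldType) (A B C D : F) (n1 n2 n3 : nat) :
  (n2 < n1)%N -> (n3 < n1)%N -> (1 < n1)%N -> (n1 < #|F|)%N ->
  (forall b : F, A * b ^+ n1 + B * b ^+ n2 + C * b ^+ n3 + D * b = 0) -> A = 0.
Proof.
move=> h2 h3 h1 hF hb.
pose P : {poly F} := A *: 'X^n1 + B *: 'X^n2 + C *: 'X^n3 + D *: 'X.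
have P0 : P = 0.
  apply: vanish.
    rewrite /P; apply: leq_trans (size_polyD _ _) _; rewrite geq_max.
    apply/andP; split; last first.
      by apply: leq_trans (size_scale_leq _ _) _; rewrite size_polyX; lia.
    apply: leq_trans (size_polyD _ _) _; rewrite geq_max.
    apply/andP; split; last first.
      by apply: leq_trans (size_scale_leq _ _) _; rewrite size_polyXn; lia.
    apply: leq_trans (size_polyD _ _) _; rewrite geq_max.
    apply/andP; split.
      by apply: leq_trans (size_scale_leq _ _) _; rewrite size_polyXn; lia.
    by apply: leq_trans (size_scale_leq _ _) _; rewrite size_polyXn; lia.
  move=> x; rewrite /P !hornerE; exact: hb.
have := congr1 (fun q : {poly F} => q`_n1) P0.
rewrite /P !coefD !coefZ !coefXn coefX coef0 eqxx (gtn_eqF h2) (gtn_eqF h3).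
rewrite (gtn_eqF h1) !mulr0 !mulr1 !addr0 => ->. by [].
Qed.

Lemma fr_sign (F : fieldType) (p c j : nat) (x e : F) : p \in [pchar F] ->
  e ^+ (p ^ c) = e -> x ^+ (p ^ c) = e * x -> x ^+ (p ^ (c * j)) = e ^+ j * x.
Proof.
move=> cp he hx; elim: j => [|j IH]; first by rewrite muln0 expn0 expr1 expr0 mul1r.
rewrite mulnS (frC _ _ c (c * j)) IH exprMn hx -exprM mulnC exprM he.
by rewrite exprS; ring.
Qed.

Lemma two_neq0 (F : fieldType) (p : nat) : p \in [pchar F] -> odd p -> (2 : F) != 0.
Proof.
move=> cp op; rewrite -[2]/(2%:R) -(dvdn_pcharf cp).
have pp := pcharf_prime cp; apply/negP => /dvdn_leq-/(_ isT) h.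
have p1 := prime_gt1 pp; have e : p = 2%N by lia.
by rewrite e in op.
Qed.

Lemma fr_card (F : finFieldType) (p m : nat) (x : F) : #|F| = (p ^ m)%N ->
  x ^+ (p ^ m) = x.
Proof. by move=> <-; apply: expf_card. Qed.

Lemma L1_inj (p m k : nat) (F : finFieldType) (a : F) :
  prime p -> odd p -> #|F| = (p ^ m)%N -> (0 < k)%N -> odd (m %/ gcdn m k) ->
  a + a ^+ (p ^ k) = 0 -> a = 0.
Proof.
move=> pp op cF k0 ot ha.
have cp : p \in [pchar F] by apply: card_finPcharP cF pp.
have hq : a ^+ (p ^ k) = (-1) * a by rewrite mulN1r; apply/eqP; rewrite -subr_eq0 opprK addrC ha.
have he : (-1 : F) ^+ (p ^ k) = -1 by rewrite frN // expr1n.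
set l := gcdn m k.
have [u _ /dvdnP[v hv]] := Bezoutl m k0.
have hm := @fr_iter _ _ _ u _ (@fr_card _ p m a cF).
have h1 : a ^+ (p ^ l) = (-1) ^+ v * a.
  have e : (k * v = gcdn k m + m * u)%N by lia.
  rewrite -(@fr_sign _ _ _ v _ _ cp he hq) e.
  by rewrite (frC _ _ (gcdn k m) (m * u)) hm /l gcdnC.
have he2 : ((-1) ^+ v : F) ^+ (p ^ l) = (-1) ^+ v by rewrite exprAC frN // expr1n.
have h2 := @fr_sign _ _ _ (m %/ l) _ _ cp he2 h1.
rewrite mulnC divnK ?dvdn_gcdl // (@fr_card _ p m a cF) -exprM in h2.
have two := @two_neq0 _ _ cp op.
case/boolP: (odd v) => vo.
  have : (-1 : F) ^+ (v * (m %/ l)) = -1 by rewrite -signr_odd oddM vo ot expr1.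
  move=> e1; rewrite e1 in h2.
  apply/eqP; move: h2 => /eqP; rewrite -subr_eq0 mulN1r opprK -mulr2n -mulr_natl.
  by rewrite mulf_eq0 (negbTE two).
have e1 : (-1 : F) ^+ v = 1 by rewrite -signr_odd (negbTE vo) expr0.
rewrite e1 mul1r in h1.
have hk : a ^+ (p ^ k) = a.
  by rewrite -(divnK (dvdn_gcdr m k)) mulnC; apply: fr_iter.
move: hq; rewrite hk mulN1r => /eqP; rewrite -subr_eq0 opprK -mulr2n -mulr_natl.
by rewrite mulf_eq0 (negbTE two) => /eqP.
Qed.

Lemma Lmap_inj (p m k : nat) (F : finFieldType) :
  prime p -> odd p -> #|F| = (p ^ m)%N -> (0 < k)%N -> odd (m %/ gcdn m k) ->
  injective (@Lmap F p k).
Proof.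
move=> pp op cF k0 ot [a b] [c d]; rewrite /Lmap /= => [[h1 ->]].
have cp : p \in [pchar F] by apply: card_finPcharP cF pp.
congr (_, _); apply/eqP; rewrite -subr_eq0; apply/eqP.
apply: (@L1_inj p m k) => //.
by rewrite frB // addrACA h1 -opprD subrr.
Qed.

Lemma LinvK (p m k : nat) (F : finFieldType) (x : F * F) :
  prime p -> odd p -> #|F| = (p ^ m)%N -> (0 < k)%N -> odd (m %/ gcdn m k) ->
  Linv p k (Lmap p k x) = x.
Proof.
move=> pp op cF k0 ot; rewrite /Linv.
case: pickP => [y /eqP hy | h]; last by move: (h x); rewrite eqxx.
exact: (@Lmap_inj p m k F pp op cF k0 ot _ _ hy).
Qed.

Lemma LmapK (p m k : nat) (F : finFieldType) (z : F * F) :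
  prime p -> odd p -> #|F| = (p ^ m)%N -> (0 < k)%N -> odd (m %/ gcdn m k) ->
  Lmap p k (Linv p k z) = z.
Proof.
move=> pp op cF k0 ot.
have : z \in codom (@Lmap F p k) by apply: inj_card_onto => //; apply: (@Lmap_inj p m k F pp op cF k0 ot).
case/codomP=> x ->; by rewrite (@LinvK p m k F _ pp op cF k0 ot).
Qed.

Lemma Linv_2 (p m k : nat) (F : finFieldType) (w : F * F) :
  prime p -> odd p -> #|F| = (p ^ m)%N -> (0 < k)%N -> odd (m %/ gcdn m k) ->
  (Linv p k w).2 = w.2.
Proof.
move=> pp op cF k0 ot; rewrite -{2}(@LmapK p m k F w pp op cF k0 ot); by [].
Qed.

Lemma Linv_1 (p m k : nat) (F : finFieldType) (w : F * F) :
  prime p -> odd p -> #|F| = (p ^ m)%N -> (0 < k)%N -> odd (m %/ gcdn m k) ->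
  (Linv p k w).1 + (Linv p k w).1 ^+ (p ^ k) = w.1.
Proof.
move=> pp op cF k0 ot; rewrite -{3}(@LmapK p m k F w pp op cF k0 ot); by [].
Qed.

Lemma circk0l (F : finFieldType) p k (d : F) : (0 < p)%N -> circk p k 0 d = 0.
Proof.
move=> p0; rewrite /circk expr0n expn_eq0 eqn0Ngt p0 /=; ring.
Qed.

Lemma sigmar0 (F : finFieldType) p r : (0 < p)%N -> sigmar p r (0 : F) = 0.
Proof. by move=> p0; rewrite /sigmar expr0n expn_eq0 eqn0Ngt p0. Qed.

Lemma nucleus_eqs (p m k r : nat) (F : finFieldType) (alpha : F) (a : F * F) :
  prime p -> odd p -> #|F| = (p ^ m)%N -> (0 < k)%N -> odd (m %/ gcdn m k) ->
  a \in middle_nucleus p k r alpha ->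
  (forall t, t * (Linv p k a).1 + (t * (Linv p k a).1) ^+ (p ^ k) = circk p k t (Linv p k a).1) /\
  (exists e1, forall t, t * e1 + (t * e1) ^+ (p ^ k) = alpha * sigmar p r (circk p k t (Linv p k a).2)).
Proof.
move=> pp op cF k0 ot; rewrite inE => /forallP H.
have p0 := prime_gt0 pp.
have HH x y : smul p k r alpha (smul p k r alpha x a) y = smul p k r alpha x (smul p k r alpha a y).
  by apply/eqP; move: (H x) => /forallP; apply.
have L2 := @Linv_2 p m k F _ pp op cF k0 ot.
have L1 := @Linv_1 p m k F _ pp op cF k0 ot.
have LK := @LinvK p m k F _ pp op cF k0 ot.
case E : (Linv p k a) => [c d] /=.
have y01 : Lmap p k (0 : F, 1 : F) = (0, 1).
  by rewrite /Lmap /= expr0n expn_eq0 eqn0Ngt p0 /= addr0.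
split.
  move=> t; have := HH (Lmap p k (t, 0)) (0, 1).
  rewrite /smul -y01 !LK E => /(congr1 snd) /=.
  rewrite !L2 /= mulr1 mulr0 addr0 mul0r addr0 => h.
  have := L1 (pmul p k r alpha (t, 0) (c, d)); rewrite h /= circk0l // sigmar0 // mulr0 addr0.
  by rewrite mulr1 mulr0 addr0.
exists (Linv p k (pmul p k r alpha (c, d) (0, 1))).1 => t.
have := HH (Lmap p k (0, t)) (0, 1).
rewrite /smul -y01 !LK E => /(congr1 snd) /=.
rewrite mulr1 !mulr0 !addr0 mul0r add0r => h.
have := L1 (pmul p k r alpha (0, t) (c, d)); rewrite h /= circk0l // add0r.
by rewrite y01.
Qed.

Lemma half_le m k : (k <= m./2)%N -> (2 * k <= m)%N.
Proof. move=> h2. have := odd_double_half m. rewrite -muln2. lia. Qed.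

Lemma gcd2k m k : (0 < k)%N -> odd (m %/ gcdn m k) -> gcdn (2 * k) m = gcdn m k.
Proof.
move=> k0 ot; set g := gcdn m k.
have g0 : (0 < g)%N by rewrite /g gcdn_gt0 k0 orbT.
have em : m = (m %/ g * g)%N by rewrite divnK // dvdn_gcdl.
have ek : k = (k %/ g * g)%N by rewrite divnK // dvdn_gcdr.
have c1 : gcdn (m %/ g) (k %/ g) = 1%N.
  apply/eqP; rewrite -(eqn_pmul2r g0) mul1n muln_gcdl -em -ek.
  by [].
move: ot c1; set m' := (m %/ g)%N; set k' := (k %/ g)%N => ot c1.
rewrite gcdnC em ek mulnA -muln_gcdl.
rewrite [(2 * _)%N]mulnC Gauss_gcdl ?coprimen2 // -/m' -/k' c1 mul1n.
by [].
Qed.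

Lemma c_fix (p m k : nat) (F : finFieldType) (c : F) :
  prime p -> #|F| = (p ^ m)%N -> (0 < k)%N -> (k <= m./2)%N ->
  (forall t, t * c + (t * c) ^+ (p ^ k) = circk p k t c) ->
  c ^+ (p ^ gcdn m k) = c.
Proof.
move=> pp cF k0 km h.
have p1 := prime_gt1 pp; have km2 := @half_le _ _ km.
have cq : c ^+ (p ^ k) = c.
  apply/eqP; rewrite -subr_eq0; apply/eqP.
  apply: (@top_coef F _ 0 0 (c - c ^+ (p ^ k)) (p ^ k) 0 0).
  - by rewrite expn_gt0 (prime_gt0 pp).
  - by rewrite expn_gt0 (prime_gt0 pp).
  - by rewrite -{1}(expn0 p) ltn_exp2l.
  - by rewrite cF ltn_exp2l //; lia.
  move=> b; have := h b; rewrite /circk exprMn => {}h.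
  have e : b * c + b ^+ (p ^ k) * c ^+ (p ^ k) - circk p k b c = 0 by rewrite h subrr.
  rewrite !mul0r !addr0 -e /circk; set B := b ^+ (p ^ k); set C := c ^+ (p ^ k); ring.
by rewrite gcdnC; apply: (@fr_gcd _ p k m c k0 cq (@fr_card _ p m c cF)).
Qed.

Lemma alpha_q (p m k : nat) (F : finFieldType) (alpha : F) :
  alpha ^+ (p ^ gcdn m k) = alpha -> alpha ^+ (p ^ k) = alpha.
Proof.
move=> ha; rewrite -(divnK (dvdn_gcdr m k)) mulnC; exact: fr_iter.
Qed.

Lemma d_id (p m k r : nat) (F : finFieldType) (alpha d : F) :
  prime p -> #|F| = (p ^ m)%N -> (0 < k)%N -> (k <= m./2)%N ->
  odd (m %/ gcdn m k) -> alpha ^+ (p ^ gcdn m k) = alpha -> alpha != 0 ->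
  (forall x : F, sigmar p r x = x) ->
  (exists e1, forall t, t * e1 + (t * e1) ^+ (p ^ k) = alpha * sigmar p r (circk p k t d)) ->
  d ^+ (p ^ gcdn m k) = d.
Proof.
move=> pp cF k0 km ot ha a0 hs [e1 h].
have p1 := prime_gt1 pp; have km2 := @half_le _ _ km.
have aq := @alpha_q p m k F alpha ha.
have h1 : alpha * d - e1 ^+ (p ^ k) = 0.
  apply: (@top_coef F _ 0 0 (alpha * d ^+ (p ^ k) - e1) (p ^ k) 0 0).
  - by rewrite expn_gt0 (prime_gt0 pp).
  - by rewrite expn_gt0 (prime_gt0 pp).
  - by rewrite -{1}(expn0 p) ltn_exp2l.
  - by rewrite cF ltn_exp2l //; lia.
  move=> b; have := h b; rewrite hs /circk exprMn => {}h.
  have e : alpha * (b ^+ (p ^ k) * d + d ^+ (p ^ k) * b) -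
     (b * e1 + b ^+ (p ^ k) * e1 ^+ (p ^ k)) = 0 by rewrite h subrr.
  rewrite !mul0r !addr0 -e; set B := b ^+ (p ^ k); set E := e1 ^+ (p ^ k);
  set D := d ^+ (p ^ k); ring.
have h2 : e1 = alpha * d ^+ (p ^ k).
  have := h 1; rewrite hs /circk !expr1n !mul1r mulr1.
  move/eqP: h1; rewrite subr_eq0 => /eqP <-.
  move=> e; apply/eqP; rewrite -(subr_eq0 e1) ; apply/eqP.
  have e' : e1 + alpha * d - alpha * (d + d ^+ (p ^ k)) = 0 by rewrite e subrr.
  rewrite -e'; ring.
have h3 : d ^+ (p ^ (2 * k)) = d.
  move/eqP: h1; rewrite subr_eq0 h2 exprMn aq -exprM -expnD addnn -mul2n => /eqP.
  by move/(mulfI a0).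
rewrite -(@gcd2k m k k0 ot); apply: (@fr_gcd _ p (2 * k) m d) => //.
  by rewrite muln_gt0 k0.
exact: (@fr_card _ p m d cF).
Qed.

Lemma rk_lt (m k r : nat) : (0 < k)%N -> (k <= m./2)%N -> (r <= m./2)%N ->
  odd (m %/ gcdn m k) -> (r + k < m)%N.
Proof.
move=> k0 km rm ot.
have km2 := @half_le _ _ km; have rm2 := @half_le _ _ rm.
rewrite ltnNge; apply/negP => h.
have em : m = (2 * k)%N by lia.
move: ot; rewrite em gcdnC gcdnMl mulnK //.
Qed.

Lemma d_zero (p m k r : nat) (F : finFieldType) (alpha d : F) :
  prime p -> #|F| = (p ^ m)%N -> (0 < k)%N -> (k <= m./2)%N ->
  odd (m %/ gcdn m k) -> (r <= m./2)%N -> alpha != 0 ->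
  (exists x : F, sigmar p r x != x) ->
  (exists e1, forall t, t * e1 + (t * e1) ^+ (p ^ k) = alpha * sigmar p r (circk p k t d)) ->
  d = 0.
Proof.
move=> pp cF k0 km ot rm a0 [x hx] [e1 h].
have cp : p \in [pchar F] by apply: card_finPcharP cF pp.
have p1 := prime_gt1 pp.
have r0 : (0 < r)%N.
  by move: hx; rewrite /sigmar; case: r {rm h} => //=; rewrite expn0 expr1 eqxx.
have rk := @rk_lt m k r k0 km rm ot.
have h1 : alpha * d ^+ (p ^ r) = 0.
  apply: (@top_coef F _ (alpha * d ^+ (p ^ (k + r))) (- e1 ^+ (p ^ k)) (- e1)
     (p ^ (k + r)) (p ^ r) (p ^ k)).
  - by rewrite ltn_exp2l //; lia.
  - by rewrite ltn_exp2l //; lia.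
  - by rewrite -{1}(expn0 p) ltn_exp2l //; lia.
  - by rewrite cF ltn_exp2l //; lia.
  move=> b; have := h b; rewrite /sigmar /circk frD // !exprMn -!exprM -!expnD.
  move=> {}h.
  have e : alpha * (b ^+ (p ^ (k + r)) * d ^+ (p ^ r) + d ^+ (p ^ (k + r)) * b ^+ (p ^ r)) -
     (b * e1 + b ^+ (p ^ k) * e1 ^+ (p ^ k)) = 0 by rewrite h subrr.
  rewrite -e; set B1 := b ^+ (p ^ (k + r)); set B2 := b ^+ (p ^ r); set B3 := b ^+ (p ^ k);
  set E := e1 ^+ (p ^ k); set D1 := d ^+ (p ^ (k + r)); set D2 := d ^+ (p ^ r); ring.
move/eqP: h1; rewrite mulf_eq0 (negbTE a0) /= expf_eq0 => /andP[_ /eqP]; by [].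
Qed.

Lemma circkC (F : finFieldType) p k (x y : F) : circk p k x y = circk p k y x.
Proof. by rewrite /circk addrC. Qed.

Lemma pmulC (F : finFieldType) p k r (alpha : F) x y :
  pmul p k r alpha x y = pmul p k r alpha y x.
Proof.
rewrite /pmul (circkC _ _ _ x.1) (circkC _ _ _ x.2); congr (_, _).
by rewrite addrC; congr (_ + _); apply: mulrC.
Qed.

Lemma nucleus_crit (p m k r : nat) (F : finFieldType) (alpha : F) (z : F * F)
    (T : F * F -> F * F) :
  prime p -> odd p -> #|F| = (p ^ m)%N -> (0 < k)%N -> odd (m %/ gcdn m k) ->
  (forall x, pmul p k r alpha x z = Lmap p k (T x)) ->
  (forall x y, pmul p k r alpha (T x) y = pmul p k r alpha x (T y)) ->
  Lmap p k z \in middle_nucleus p k r alpha.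
Proof.
move=> pp op cF k0 ot hT hS.
have LK := @LinvK p m k F _ pp op cF k0 ot.
rewrite inE; apply/forallP => x; apply/forallP => y; apply/eqP.
rewrite /smul !LK hT LK (pmulC _ _ _ _ _ z) hT LK; exact: hS.
Qed.

Lemma mem_nid (p m k r : nat) (F : finFieldType) (alpha c : F) :
  prime p -> odd p -> #|F| = (p ^ m)%N -> (0 < k)%N -> odd (m %/ gcdn m k) ->
  c ^+ (p ^ gcdn m k) = c ->
  Lmap p k (c, 0) \in middle_nucleus p k r alpha.
Proof.
move=> pp op cF k0 ot hc.
have cp : p \in [pchar F] by apply: card_finPcharP cF pp.
have p0 := prime_gt0 pp.
have cq := @alpha_q p m k F c hc.
have cl x y : circk p k (c * x) y = c * circk p k x y.
  rewrite /circk exprMn cq; ring.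
have cr x y : circk p k x (c * y) = c * circk p k x y.
  by rewrite circkC cl circkC.
apply: (@nucleus_crit p m k r F alpha _ (fun x => (c * x.1, c * x.2))) => //.
  move=> [x1 x2]; rewrite /pmul /Lmap /= circkC (circkC _ _ _ x2) circk0l // sigmar0 //.
  rewrite /circk exprMn cq; congr (_, _); ring.
move=> [x1 x2] [y1 y2]; rewrite /pmul /= cl cr cl cr; congr (_, _); ring.
Qed.

Lemma mem_id (p m k r : nat) (F : finFieldType) (alpha c d : F) :
  prime p -> odd p -> #|F| = (p ^ m)%N -> (0 < k)%N -> odd (m %/ gcdn m k) ->
  alpha ^+ (p ^ gcdn m k) = alpha ->
  (forall x : F, sigmar p r x = x) ->
  c ^+ (p ^ gcdn m k) = c -> d ^+ (p ^ gcdn m k) = d ->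
  Lmap p k (c, d) \in middle_nucleus p k r alpha.
Proof.
move=> pp op cF k0 ot ha hs hc hd.
have cp : p \in [pchar F] by apply: card_finPcharP cF pp.
have cq := @alpha_q p m k F c hc.
have dq := @alpha_q p m k F d hd.
have aq := @alpha_q p m k F alpha ha.
apply: (@nucleus_crit p m k r F alpha _
   (fun x => (c * x.1 + alpha * d * x.2, d * x.1 + c * x.2))) => //.
  move=> [x1 x2]; rewrite /pmul /Lmap /= !hs /circk frD // !exprMn cq dq aq.
  congr (_, _); set X1 := x1 ^+ (p ^ k); set X2 := x2 ^+ (p ^ k); ring.
move=> [x1 x2] [y1 y2]; rewrite /pmul /= !hs /circk !frD // !exprMn cq dq aq.
congr (_, _); set X1 := x1 ^+ (p ^ k); set X2 := x2 ^+ (p ^ k);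
set Y1 := y1 ^+ (p ^ k); set Y2 := y2 ^+ (p ^ k); ring.
Qed.

Definition fp (R : nzRingType) (p : nat) (c : 'F_p) : R := (nat_of_ord c)%:R.
Lemma fp_nat (R : nzRingType) p n : p \in [pchar R] -> fp R p (inZp n) = n%:R.
Proof.
move=> cp; rewrite /fp /=.
rewrite [in RHS](divn_eq n p) natrD mulrnA (mulrn_pchar cp) add0r.
by rewrite (Fp_cast (pcharf_prime cp)).
Qed.
Lemma fpD (R : nzRingType) p (c d : 'F_p) : p \in [pchar R] -> fp R p (c + d) = fp R p c + fp R p d.
Proof.
move=> cp; rewrite -natrD -(@fp_nat R p _ cp); congr (fp _ _ _); apply: val_inj => /=.
by [].
Qed.
Lemma fpM (R : nzRingType) p (c d : 'F_p) : p \in [pchar R] -> fp R p (c * d) = fp R p c * fp R p d.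
Proof.
move=> cp; rewrite -natrM -(@fp_nat R p _ cp); congr (fp _ _ _); apply: val_inj => /=.
by [].
Qed.
Lemma fp1 (R : nzRingType) p : p \in [pchar R] -> fp R p 1 = 1.
Proof.
move=> cp; rewrite /fp.
have -> : nat_of_ord (1 : 'F_p) = 1%N.
  by rewrite /= (Fp_cast (pcharf_prime cp)) modn_small // prime_gt1 // (pcharf_prime cp).
by [].
Qed.
Lemma fp0 (R : nzRingType) p : fp R p 0 = 0.
Proof. by []. Qed.
Definition fpm (R : nzRingType) (p : nat) (cp : p \in [pchar R]) (c : 'F_p) : R := fp R p c.
Arguments fpm {R p} cp c.
Lemma fpm_nmod (R : nzRingType) p (cp : p \in [pchar R]) : nmod_morphism (fpm cp).
Proof. split; [exact: fp0 | move=> x y; exact: fpD]. Qed.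
Lemma fpm_monoid (R : nzRingType) p (cp : p \in [pchar R]) : monoid_morphism (fpm cp).
Proof. split; [exact: fp1 | move=> x y; exact: fpM]. Qed.
HB.instance Definition _ (R : nzRingType) p (cp : p \in [pchar R]) :=
  GRing.isNmodMorphism.Build _ _ (@fpm R p cp) (@fpm_nmod R p cp).
HB.instance Definition _ (R : nzRingType) p (cp : p \in [pchar R]) :=
  GRing.isMonoidMorphism.Build _ _ (@fpm R p cp) (@fpm_monoid R p cp).

Definition ev (R : comNzRingType) p (cp : p \in [pchar R]) (h : R) (Q : {poly 'F_p}) : R :=
  (map_poly (fpm cp) Q).[h].
Arguments ev {R p} cp h Q.

Lemma evD (R : comNzRingType) p (cp : p \in [pchar R]) h Q1 Q2 :
  ev cp h (Q1 + Q2) = ev cp h Q1 + ev cp h Q2.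
Proof. by rewrite /ev rmorphD hornerD. Qed.
Lemma evB (R : comNzRingType) p (cp : p \in [pchar R]) h Q1 Q2 :
  ev cp h (Q1 - Q2) = ev cp h Q1 - ev cp h Q2.
Proof. by rewrite /ev rmorphB hornerD hornerN. Qed.
Lemma evM (R : comNzRingType) p (cp : p \in [pchar R]) h Q1 Q2 :
  ev cp h (Q1 * Q2) = ev cp h Q1 * ev cp h Q2.
Proof. by rewrite /ev rmorphM hornerM. Qed.
Lemma ev1 (R : comNzRingType) p (cp : p \in [pchar R]) h : ev cp h 1 = 1.
Proof. by rewrite /ev rmorph1 hornerC. Qed.
Lemma ev0 (R : comNzRingType) p (cp : p \in [pchar R]) h : ev cp h 0 = 0.
Proof. by rewrite /ev rmorph0 horner0. Qed.
Lemma evXn (R : comNzRingType) p (cp : p \in [pchar R]) h n : ev cp h 'X^n = h ^+ n.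
Proof. by rewrite /ev map_polyXn hornerXn. Qed.
Lemma evX (R : comNzRingType) p (cp : p \in [pchar R]) h : ev cp h 'X = h.
Proof. by rewrite /ev map_polyX hornerX. Qed.
Lemma evC (R : comNzRingType) p (cp : p \in [pchar R]) h c : ev cp h c%:P = fpm cp c.
Proof. by rewrite /ev map_polyC hornerC. Qed.

Lemma fpm_frob (R : fieldType) p (cp : p \in [pchar R]) a c :
  (fpm cp c) ^+ (p ^ a) = fpm cp c.
Proof.
have pp := pcharf_prime cp.
rewrite -rmorphXn; congr (fpm cp _).
have h1 : c ^+ (p ^ 1) = c by rewrite expn1; have := expf_card c; rewrite card_Fp.
by rewrite -(mul1n a) fr_iter.
Qed.

Lemma ev_frob (R : fieldType) p (cp : p \in [pchar R]) a h Q :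
  h ^+ (p ^ a) = h -> (ev cp h Q) ^+ (p ^ a) = ev cp h Q.
Proof.
move=> hh; have pp := pcharf_prime cp.
elim/poly_ind: Q => [|Q c IH].
  by rewrite ev0 expr0n expn_eq0 eqn0Ngt prime_gt0.
by rewrite evD evM evX evC frD // exprMn IH hh fpm_frob.
Qed.

Lemma minpoly_ex (R : comNzRingType) p (cp : p \in [pchar R]) (g : R) (Q0 : {poly 'F_p}) :
  Q0 != 0 -> ev cp g Q0 = 0 ->
  exists f, [/\ f != 0, ev cp g f = 0 & forall Q, ev cp g Q = 0 -> f %| Q].
Proof.
move=> nz0 e0.
suff H : forall n (Q : {poly 'F_p}), (size Q <= n)%N -> Q != 0 -> ev cp g Q = 0 ->
  exists f, [/\ f != 0, ev cp g f = 0 & forall Q, ev cp g Q = 0 -> f %| Q].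
  exact: (H _ Q0 (leqnn _)).
elim=> [|n IH] Q hs nz eQ.
  by move: nz; rewrite -size_poly_eq0; move: hs; rewrite leqn0 => /eqP ->.
case: (classic (exists R0, [/\ R0 != 0, ev cp g R0 = 0 & (size R0 < size Q)%N])).
  case=> R0 [nzR eR sR]; apply: (IH R0) => //; lia.
move=> hno; exists Q; split => // Q1 e1.
rewrite /dvdp; apply/negPn/negP => nzr.
apply: hno; exists (Q1 %% Q); split => //.
  have := divp_eq Q1 Q; move/(congr1 (ev cp g)); rewrite evD evM eQ mulr0 add0r e1.
  by move=> <-.
by rewrite ltn_modp.
Qed.

Lemma root_ex (F : finFieldType) p (cpF : p \in [pchar F]) (f : {poly 'F_p}) :
  (1 < size f)%N -> f %| 'X^#|F| - 'X -> exists h : F, ev cpF h f = 0.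
Proof.
move=> sf hdiv.
have hd : map_poly (fpm cpF) f %| \prod_x ('X - x%:P).
  rewrite -finField_genPoly; move: hdiv; rewrite -(dvdp_map (fpm cpF)).
  by rewrite rmorphB /= map_polyXn map_polyX.
case: (dvdp_prod_XsubC hd) => ms hms.
have := eqp_size hms; rewrite size_map_poly size_prod_XsubC.
case E: (mask ms _) => [|x M] /=; first by move=> h; rewrite h in sf.
move=> _; exists x; apply/eqP; rewrite /ev.
have := eqp_root hms x; rewrite /root => ->.
by rewrite E big_cons hornerM hornerXsubC subrr mul0r.
Qed.

Lemma embed (K F : finFieldType) (p a m : nat) (g : K) :
  prime p -> p \in [pchar K] -> #|F| = (p ^ m)%N -> (a %| m)%N -> (0 < a)%N ->
  (p ^ a).-1.-primitive_root g ->
  exists phi : K -> F, [/\ phi 1 = 1,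
    (forall x y, x ^+ (p ^ a) = x -> y ^+ (p ^ a) = y -> phi (x + y) = phi x + phi y),
    (forall x y, x ^+ (p ^ a) = x -> y ^+ (p ^ a) = y -> phi (x * y) = phi x * phi y),
    (forall x y, x ^+ (p ^ a) = x -> y ^+ (p ^ a) = y -> phi x = phi y -> x = y) &
    (forall w : F, w ^+ (p ^ a) = w <-> exists x, x ^+ (p ^ a) = x /\ phi x = w)].
Proof.
move=> pp cpK cF am a0 prim.
have cpF : p \in [pchar F] by apply: card_finPcharP cF pp.
set n := (p ^ a).-1.
have pa1 : (1 < p ^ a)%N by rewrite -{1}(expn0 p) ltn_exp2l ?prime_gt1.
have en : (p ^ a = n.+1)%N by rewrite /n prednK //; lia.
have n0 : (0 < n)%N by rewrite /n; lia.
have gn : g ^+ n = 1 := prim_expr_order prim.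
have gq : g ^+ (p ^ a) = g by rewrite en exprS gn mulr1.
have g0 : g != 0 by apply/eqP => g0; move: gn; rewrite g0 expr0n (gtn_eqF n0) => /eqP; rewrite eq_sym oner_eq0.
pose Q0 : {poly 'F_p} := 'X^(p ^ a) - 'X.
have Q0nz : Q0 != 0.
  apply/eqP => /(congr1 (fun q : {poly 'F_p} => q`_(p ^ a))).
  rewrite /Q0 coefB coefXn coefX eqxx (gtn_eqF pa1) coef0 subr0 => /eqP.
  by rewrite oner_eq0.
have eQ0 : ev cpK g Q0 = 0 by rewrite /Q0 evB evXn evX gq subrr.
have [f [fnz fg fmin]] := @minpoly_ex _ _ cpK g Q0 Q0nz eQ0.
have sf : (1 < size f)%N.
  rewrite ltnNge; apply/negP => /size1_polyC fE.
  move: fg; rewrite fE evC => /eqP; rewrite fmorph_eq0 => /eqP c0.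
  by move: fnz; rewrite fE c0 eqxx.
have fdiv : f %| 'X^#|F| - 'X.
  apply: fmin; rewrite evB evXn evX cF.
  by rewrite -(divnK am) mulnC fr_iter // subrr.
have [h hf] := @root_ex F p cpF f sf fdiv.
have tr Q : ev cpK g Q = 0 -> ev cpF h Q = 0.
  by move/fmin => /divpK <-; rewrite evM hf mulr0.
have tr2 Q1 Q2 : ev cpK g Q1 = ev cpK g Q2 -> ev cpF h Q1 = ev cpF h Q2.
  move=> e; apply/eqP; rewrite -subr_eq0 -evB; apply/eqP; apply: tr.
  by rewrite evB e subrr.
have hq : h ^+ (p ^ a) = h.
  apply/eqP; rewrite -subr_eq0; apply/eqP.
  by have := tr Q0 eQ0; rewrite /Q0 evB evXn evX.
have rep x : x ^+ (p ^ a) = x -> exists Q, ev cpK g Q = x.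
  move=> hx; have [->|x0] := eqVneq x 0; first by exists 0; rewrite ev0.
  have xn : x ^+ n = 1.
    apply: (mulfI x0); rewrite mulr1 -exprS -en; exact: hx.
  have [i ->] := prim_rootP prim xn.
  by exists 'X^i; rewrite evXn.
pose phi (x : K) : F := if [pick i : 'I_n | g ^+ i == x] is Some i then h ^+ i else 0.
have key Q : phi (ev cpK g Q) = ev cpF h Q.
  rewrite /phi; case: pickP => [i /eqP hi | hnone].
    by rewrite -(@evXn _ _ cpF h i); apply: tr2; rewrite evXn hi.
  have : ev cpK g Q = 0.
    apply/eqP; apply: contraT => nz.
    have fx := @ev_frob _ _ cpK a g Q gq.
    have xn : (ev cpK g Q) ^+ n = 1.
      apply: (mulfI nz); rewrite mulr1 -exprS -en; exact: fx.
    have [i hi] := prim_rootP prim xn.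
    by move: (hnone i); rewrite hi eqxx.
  by move=> e; rewrite (tr _ e).
have inj x y : x ^+ (p ^ a) = x -> y ^+ (p ^ a) = y -> phi x = phi y -> x = y.
  move=> hx hy e; have [Q1 E1] := rep x hx; have [Q2 E2] := rep y hy.
  rewrite -E1 -E2 in e *; rewrite !key in e.
  apply/eqP; rewrite -subr_eq0 -evB; apply: contraT => nz.
  set u := ev cpK g (Q1 - Q2) in nz.
  have hu : u ^+ (p ^ a) = u := @ev_frob _ _ cpK a g _ gq.
  have hui : u^-1 ^+ (p ^ a) = u^-1 by rewrite exprVn hu.
  have [Q3 E3] := rep _ hui.
  have : ev cpF h ((Q1 - Q2) * Q3) = 1.
    rewrite -(@ev1 _ _ cpF h); apply: tr2; rewrite evM E3 ev1 mulfV //.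
  by rewrite evM evB e subrr mul0r => /eqP; rewrite eq_sym oner_eq0.
exists phi; split.
- by rewrite -(@ev1 _ _ cpK g) key ev1.
- move=> x y hx hy; have [Q1 <-] := rep x hx; have [Q2 <-] := rep y hy.
  by rewrite -evD !key evD.
- move=> x y hx hy; have [Q1 <-] := rep x hx; have [Q2 <-] := rep y hy.
  by rewrite -evM !key evM.
- exact: inj.
move=> w; split; last first.
  by case=> x [hx <-]; have [Q <-] := rep x hx; rewrite key; apply: ev_frob.
move=> hw.
set SK := [set x : K | x ^+ (p ^ a) == x].
set SF := [set w : F | w ^+ (p ^ a) == w].
have injK : {in SK &, injective phi}.
  by move=> x y; rewrite !inE => /eqP hx /eqP hy; apply: inj.
have sub : phi @: SK \subset SF.
  apply/subsetP => y /imsetP[x]; rewrite inE => /eqP hx ->; rewrite inE.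
  have [Q <-] := rep x hx; rewrite key; apply/eqP; apply: ev_frob hq.
have cK : (p ^ a <= #|SK|)%N.
  pose S' := [set g ^+ (val i) | i : 'I_n].
  have cS' : #|S'| = n.
    rewrite card_imset ?card_ord // => i j /eqP.
    by rewrite (eq_prim_root_expr prim) !modn_small ?ltn_ord // => /eqP; apply: val_inj.
  have n0S : 0 \notin S'.
    apply/imsetP => [[i _]] /eqP; rewrite eq_sym expf_eq0 (negbTE g0) andbF.
    by [].
  have : (0 |: S') \subset SK.
    apply/subsetP => x; rewrite !inE => /orP [/eqP -> | /imsetP [i _ ->]].
      by rewrite expr0n expn_eq0 eqn0Ngt prime_gt0.
    by rewrite -exprM mulnC exprM gq.
  by move/subset_leq_card; rewrite cardsU1 n0S cS' en.
have cF' : (#|SF| <= p ^ a)%N.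
  have sz : size ('X^(p ^ a) - 'X : {poly F}) = (p ^ a).+1.
    rewrite size_addl ?size_polyXn // size_opp size_polyX; lia.
  have nz : ('X^(p ^ a) - 'X : {poly F}) != 0 by rewrite -size_poly_eq0 sz.
  have hall : all (root ('X^(p ^ a) - 'X : {poly F})) (enum SF).
    apply/allP => x; rewrite mem_enum inE /root hornerD hornerN hornerXn hornerX.
    by move=> /eqP ->; rewrite subrr.
  have := @max_poly_roots _ ('X^(p ^ a) - 'X : {poly F}) (enum SF) nz hall (enum_uniq _).
  by rewrite sz -cardE ltnS.
have eqS : phi @: SK = SF.
  apply/eqP; rewrite eqEcard sub /= card_in_imset //; exact: leq_trans cF' cK.
have : w \in phi @: SK by rewrite eqS inE hw eqxx.
by case/imsetP => x; rewrite inE => /eqP hx ->; exists x.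
Qed.

Lemma getw (K : finFieldType) : exists w : K, (#|K|.-1).-primitive_root w.
Proof.
have c1 : (1 < #|K|)%N := finNzRing_gt1 K.
set n := #|K|.-1.
have n0 : (0 < n)%N by rewrite /n; lia.
have en : #|K| = n.+1 by rewrite /n; lia.
have hall : all n.-unity_root (enum [pred x : K | x != 0]).
  apply/allP => x; rewrite mem_enum inE => nz; rewrite unity_rootE.
  apply/eqP; apply: (mulfI nz); rewrite mulr1 -exprS -en; exact: expf_card.
have hs : (n <= size (enum [pred x : K | x != 0%R]))%N.
  by rewrite -cardE (cardC1 (0 : K)) -/n.
have /hasP [w _ hw] := has_prim_root n0 hall (enum_uniq _) hs.
by exists w.
Qed.

Lemma LmapD (p m : nat) (F : finFieldType) k (x y : F * F) : p \in [pchar F] ->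
  Lmap p k (x.1 + y.1, x.2 + y.2) = sadd (Lmap p k x) (Lmap p k y).
Proof. by move=> cp; rewrite /Lmap /sadd /= frD // addrACA. Qed.

Lemma part2 (p m k r : nat) (F : finFieldType) (alpha : F) :
  prime p -> odd p -> #|F| = (p ^ m)%N -> (0 < k)%N -> (k <= m./2)%N ->
  odd (m %/ gcdn m k) -> alpha ^+ (p ^ gcdn m k) = alpha -> alpha != 0 ->
  (r <= m./2)%N -> (exists x : F, sigmar p r x != x) ->
  forall K : finFieldType, #|K| = (p ^ gcdn m k)%N -> nucleus_iso p k r alpha K.
Proof.
move=> pp op cF k0 km ot ha a0 rm hs K cK.
have cp : p \in [pchar F] by apply: card_finPcharP cF pp.
have cpK : p \in [pchar K] by apply: card_finPcharP cK pp.
have p0 := prime_gt0 pp.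
set l := gcdn m k.
have l0 : (0 < l)%N by rewrite /l gcdn_gt0 k0 orbT.
have [w hw] := getw K; rewrite cK in hw.
have [iota [i1 iD iM iinj isurj]] :=
  @embed K F p l m w pp cpK cF (dvdn_gcdl m k) l0 hw.
have fixK (x : K) : x ^+ (p ^ l) = x by rewrite -cK expf_card.
have fixF x : iota x ^+ (p ^ l) = iota x by apply/(isurj (iota x)); exists x.
have fixq x : iota x ^+ (p ^ k) = iota x by apply: (@alpha_q p m k F); apply: fixF.
have LK := @LinvK p m k F _ pp op cF k0 ot.
exists (fun x => Lmap p k (iota x, 0)); split.
- move=> x y /(@Lmap_inj p m k F pp op cF k0 ot) [e].
  exact: iinj (fixK x) (fixK y) e.
- move=> a; split.
    move=> ha'.
    have [hc he] := @nucleus_eqs p m k r F alpha a pp op cF k0 ot ha'.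
    have cf := @c_fix p m k F _ pp cF k0 km hc.
    have d0 := @d_zero p m k r F alpha _ pp cF k0 km ot rm a0 hs he.
    have [x [_ hx]] := (isurj _).1 cf.
    exists x; rewrite hx -d0 -surjective_pairing.
    exact: (@LmapK p m k F a pp op cF k0 ot).
  by case=> x <-; apply: (@mem_nid p m k r F alpha _ pp op cF k0 ot); apply: fixF.
- by move=> x y; rewrite iD // -(@LmapD p m F k (iota x, 0) (iota y, 0) cp) /= addr0.
- move=> x y; rewrite iM // /smul !LK /Lmap /pmul /= circk0l // sigmar0 //.
  rewrite /circk !fixq exprMn !fixq !mulr0 !mul0r !addr0; congr (_, _); ring.
- by rewrite i1.
Qed.

Definition uK (K : fieldType) (q : nat) (x : K) : K := (x + x ^+ q) / 2.
Definition vK (K : fieldType) (q : nat) (s x : K) : K := (x - x ^+ q) / (2 * s).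
Arguments uK {K} q x.
Arguments vK {K} q s x.

Lemma two_fix (K : fieldType) p l : p \in [pchar K] -> (2 : K) ^+ (p ^ l) = 2.
Proof. by move=> cp; rewrite -[2]/(1 + 1 : K) frD // expr1n. Qed.

Lemma decomp_u (K : fieldType) p l (s x : K) : p \in [pchar K] -> (2 : K) != 0 ->
  (forall y : K, (y ^+ (p ^ l)) ^+ (p ^ l) = y) -> uK (p ^ l)%N x ^+ (p ^ l) = uK (p ^ l)%N x.
Proof.
move=> cp two hK; rewrite /uK expr_div_n two_fix // frD // hK addrC //.
Qed.

Lemma decomp_v (K : fieldType) p l (s x : K) : p \in [pchar K] -> (2 : K) != 0 ->
  s != 0 -> s ^+ (p ^ l) = - s ->
  (forall y : K, (y ^+ (p ^ l)) ^+ (p ^ l) = y) -> vK (p ^ l)%N s x ^+ (p ^ l) = vK (p ^ l)%N s x.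
Proof.
move=> cp two s0 hs hK; rewrite /vK expr_div_n exprMn two_fix // hs frB // hK.
by field; rewrite s0 two oppr_eq0 s0.
Qed.

Lemma decomp_eq (K : fieldType) p l (s x : K) : (2 : K) != 0 -> s != 0 ->
  x = uK (p ^ l)%N x + vK (p ^ l)%N s x * s.
Proof. by move=> two s0; rewrite /uK /vK; field; rewrite ?two ?s0. Qed.

Lemma decomp_uniq (K : fieldType) p l (s u0 v0 : K) : p \in [pchar K] -> (2 : K) != 0 ->
  s != 0 -> s ^+ (p ^ l) = - s -> u0 ^+ (p ^ l) = u0 -> v0 ^+ (p ^ l) = v0 ->
  uK (p ^ l)%N (u0 + v0 * s) = u0 /\ vK (p ^ l)%N s (u0 + v0 * s) = v0.
Proof.
move=> cp two s0 hs hu hv; rewrite /uK /vK frD // exprMn hu hv hs.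
by split; field; rewrite ?two ?s0.
Qed.

Lemma part1 (p m k r : nat) (F : finFieldType) (alpha : F) :
  prime p -> odd p -> #|F| = (p ^ m)%N -> (0 < k)%N -> (k <= m./2)%N ->
  odd (m %/ gcdn m k) -> alpha ^+ (p ^ gcdn m k) = alpha -> alpha != 0 ->
  (forall x : F, x ^+ 2 != alpha) ->
  (forall x : F, sigmar p r x = x) ->
  forall K : finFieldType, #|K| = (p ^ (2 * gcdn m k))%N -> nucleus_iso p k r alpha K.
Proof.
move=> pp op cF k0 km ot ha a0 nsq hs K cK.
have cp : p \in [pchar F] by apply: card_finPcharP cF pp.
have cpK : p \in [pchar K] by apply: card_finPcharP cK pp.
have p0 := prime_gt0 pp.
set l := gcdn m k.
have l0 : (0 < l)%N by rewrite /l gcdn_gt0 k0 orbT.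
set N := (p ^ l)%N.
have N1 : (1 < N)%N by rewrite /N -{1}(expn0 p) ltn_exp2l ?prime_gt1.
have NN : (p ^ (2 * l) = N * N)%N by rewrite mulnC expnM mulnn.
have [w hw] := getw K; rewrite cK NN in hw.
have e2 : ((N * N).-1 = N.-1 * N.+1)%N by nia.
have dv : (N.-1 %| (N * N).-1)%N by rewrite e2 dvdn_mulr.
have hg := dvdn_prim_root hw dv; rewrite e2 mulKn in hg; last by lia.
set g := w ^+ N.+1 in hg.
have [iota [i1 iD iM iinj isurj]] :=
  @embed K F p l m g pp cpK cF (dvdn_gcdl m k) l0 hg.
have fixK (x : K) : (x ^+ N) ^+ N = x by rewrite -exprM -NN -cK expf_card.
have fixF (x : K) : x ^+ N = x -> iota x ^+ N = iota x.
  by move=> hx; apply/(isurj (iota x)); exists x.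
have fixq (x : K) : x ^+ N = x -> iota x ^+ (p ^ k) = iota x.
  by move=> hx; apply: (@alpha_q p m k F); apply: fixF.
have aq := @alpha_q p m k F alpha ha.
have LK := @LinvK p m k F _ pp op cF k0 ot.
have f0 : (0 : K) ^+ N = 0 by rewrite expr0n; case: (N) N1.
have fxD (x y : K) : x ^+ N = x -> y ^+ N = y -> (x + y) ^+ N = x + y.
  by move=> hx hy; rewrite /N frD // -/N hx hy.
have fxM (x y : K) : x ^+ N = x -> y ^+ N = y -> (x * y) ^+ N = x * y.
  by move=> hx hy; rewrite exprMn hx hy.
have i0 : iota 0 = 0.
  have e := iD 0 0 f0 f0; rewrite addr0 in e.
  by apply: (addrI (iota 0)); rewrite -e addr0.
have [a1 [fa1 ia1]] := (isurj alpha).1 ha.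
have a1nz : a1 != 0 by apply/eqP => e; move: a0; rewrite -ia1 e i0 eqxx.
have a1n : a1 ^+ N.-1 = 1.
  apply: (mulfI a1nz); rewrite mulr1 -exprS prednK; [exact: fa1 | lia].
have [i hi] := prim_rootP hg a1n.
have Nodd : odd N by rewrite /N oddX op orbT.
set h2 := (N.+1)./2.
have hh : (N.+1 = h2 * 2)%N.
  by have := odd_double_half N.+1; rewrite /= Nodd /= -muln2 add0n => ->.
set s := w ^+ (h2 * i).
have hs2 : s * s = a1.
  by rewrite hi /s /g -exprD -exprM; congr (w ^+ _); rewrite hh; nia.
have s0 : s != 0 by apply/eqP => e; move: a1nz; rewrite -hs2 e mul0r eqxx.
have sN : s ^+ N = - s.
  have e : (s ^+ N) ^+ 2 == s ^+ 2.
    by rewrite -exprM mulnC exprM expr2 hs2 fa1.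
  rewrite eqf_sqr in e; case/orP: e => /eqP // e.
  exfalso; have := nsq (iota s); rewrite expr2 -iM // hs2 ia1 eqxx //.
have two : (2 : K) != 0 := @two_neq0 _ _ cpK op.
have uf (x : K) : uK N x ^+ N = uK N x := @decomp_u K p l s x cpK two fixK.
have vf (x : K) : vK N s x ^+ N = vK N s x := @decomp_v K p l s x cpK two s0 sN fixK.
have dq (x : K) : x = uK N x + vK N s x * s := @decomp_eq K p l s x two s0.
have du (u0 v0 : K) := @decomp_uniq K p l s u0 v0 cpK two s0 sN.
exists (fun x => Lmap p k (iota (uK N x), iota (vK N s x))); split.
- move=> x y /(@Lmap_inj p m k F pp op cF k0 ot) [e1 e2'].
  have := iinj _ _ (uf x) (uf y) e1; have := iinj _ _ (vf x) (vf y) e2'.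
  by move=> ev eu; rewrite (dq x) (dq y) eu ev.
- move=> a; split.
    move=> ha'.
    have [hc he] := @nucleus_eqs p m k r F alpha a pp op cF k0 ot ha'.
    have cf := @c_fix p m k F _ pp cF k0 km hc.
    have df := @d_id p m k r F alpha _ pp cF k0 km ot ha a0 hs he.
    have [x1 [fx1 ix1]] := (isurj _).1 cf.
    have [y1 [fy1 iy1]] := (isurj _).1 df.
    exists (x1 + y1 * s).
    have [eu ev] := du x1 y1 fx1 fy1.
    rewrite eu ev ix1 iy1 -surjective_pairing.
    exact: (@LmapK p m k F a pp op cF k0 ot).
  case=> x <-; apply: (@mem_id p m k r F alpha _ _ pp op cF k0 ot ha hs).
    by apply: fixF; apply: uf.
  by apply: fixF; apply: vf.
- move=> x y.
  have eu : uK N (x + y) = uK N x + uK N y.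
    by rewrite /uK /N frD // -/N -mulrDl addrACA.
  have ev : vK N s (x + y) = vK N s x + vK N s y.
    by rewrite /vK /N frD // -/N -mulrDl opprD addrACA.
  rewrite eu ev iD ?uf // iD ?vf //.
  exact: (@LmapD p m F k (iota (uK N x), iota (vK N s x))
             (iota (uK N y), iota (vK N s y)) cp).
- move=> x y.
  have fA := uf x; have fB := vf x; have fC := uf y; have fD := vf y.
  set A := uK N x in fA *; set B := vK N s x in fB *.
  set C := uK N y in fC *; set D := vK N s y in fD *.
  have exy : x * y = (A * C + a1 * (B * D)) + (A * D + B * C) * s.
    rewrite {1}(dq x) {1}(dq y) -/A -/B -/C -/D -hs2; ring.
  have f1 : (A * C + a1 * (B * D)) ^+ N = A * C + a1 * (B * D).
    exact: (fxD _ _ (fxM _ _ fA fC) (fxM _ _ fa1 (fxM _ _ fB fD))).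
  have f2 : (A * D + B * C) ^+ N = A * D + B * C.
    exact: (fxD _ _ (fxM _ _ fA fD) (fxM _ _ fB fC)).
  have [eu ev] := du _ _ f1 f2.
  have i_u : iota (A * C + a1 * (B * D)) = iota A * iota C + alpha * (iota B * iota D).
    rewrite iD; [|exact: fxM _ _ fA fC|exact: fxM _ _ fa1 (fxM _ _ fB fD)].
    by rewrite (iM _ _ fA fC) (iM _ _ fa1 (fxM _ _ fB fD)) (iM _ _ fB fD) ia1.
  have i_v : iota (A * D + B * C) = iota A * iota D + iota B * iota C.
    rewrite iD; [|exact: fxM _ _ fA fD|exact: fxM _ _ fB fC].
    by rewrite (iM _ _ fA fD) (iM _ _ fB fC).
  rewrite exy eu ev i_u i_v /smul !LK /Lmap /pmul /= !hs /circk.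
  rewrite frD // !exprMn !fixq // aq.
  congr (_, _); ring.
- rewrite /uK /vK expr1n subrr mul0r i0.
  have -> : (1 + 1) / 2 = (1 : K) by rewrite divff.
  by rewrite i1.
Qed.

Theorem theorem2 (p m k r : nat) (F : finFieldType) (alpha : F) :
  prime p -> odd p ->
  #|F| = (p ^ m)%N ->
  (0 < k)%N -> (k <= m./2)%N ->
  odd (m %/ gcdn m k) ->
  alpha ^+ (p ^ gcdn m k) = alpha ->
  alpha != 0 ->
  (forall x : F, x ^+ 2 != alpha) ->
  (r <= m./2)%N ->
  ((forall x : F, sigmar p r x = x) ->
     forall K : finFieldType, #|K| = (p ^ (2 * gcdn m k))%N ->
       nucleus_iso p k r alpha K)
  /\
  ((exists x : F, sigmar p r x != x) ->
     forall K : finFieldType, #|K| = (p ^ gcdn m k)%N ->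
       nucleus_iso p k r alpha K).
Proof.
move=> pp op cF k0 km ot ha a0 nsq rm; split.
  by move=> hs; apply: (@part1 p m k r F alpha pp op cF k0 km ot ha a0 nsq hs).
by move=> hs; apply: (@part2 p m k r F alpha pp op cF k0 km ot ha a0 rm hs).
Qed.
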